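(* Let $H$ be an (inclusion-wise) minimal feasible solution of a $k$-Flexible Steiner Tree instance with $k$ terminals, and let $\mathrm{CBT}(H)$ be a condensed block-tree of $H$ (obtained from a block-tree $\mathrm{BT}(H)$ in which every leaf corresponds to a block of $H$ containing exactly one terminal, so that the leaves of $\mathrm{CBT}(H)$ correspond to the terminals). Call the 2NC blocks of $H$ corresponding to internal nodes of $\mathrm{CBT}(H)$ high-degree blocks. Then the total number of cut-nodes of $H$ lying in high-degree blocks, counted with repetitions (once for each high-degree block containing it), is at most $3k-6$.
   Context: $k$-Flexible Steiner Tree: the input is an undirected graph $G=(V,E)$ whose edge set is partitioned into safe edges and unsafe edges, and a terminal set $T\subseteq V$ with $|T|=k\geq3$; a feasible solution is a connected subgraph $H=(U,F)$ with $T\subseteq U$ such that $H-e$ is connected for every unsafe edge $e\in F$. A block of a graph is a maximal connected subgraph without a cut-node; a 2NC block is a block that is 2-node-connected. A block-tree $\mathrm{BT}(H)$ of $H$ is a tree whose nodes are in one-to-one correspondence with the 2NC blocks of $H$, such that two nodes are adjacent if the corresponding blocks are joined by a bridge of $H$, and for every cut-node $v$ of $H$ the set of nodes corresponding to 2NC blocks containing $v$ induces a connected subtree. A condensed block-tree $\mathrm{CBT}(H)$ is obtained from $\mathrm{BT}(H)$ by keeping exactly the nodes $b$ with $\deg_{\mathrm{BT}(H)}(b)\neq2$, two such nodes being adjacent iff every internal node of the path between them in $\mathrm{BT}(H)$ has degree two. The paper works on the modified instance in which, for each terminal $v$, a new node $v'$ and a new safe edge $vv'$ are added and the new nodes are the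 terminals, and it is assumed (as stated in the paper) that every leaf of $\mathrm{BT}(H)$ corresponds to a block containing exactly one terminal. *)

(* Defs.v *)
(* Graphs are finite simple graphs on a finType W;
   an edge is a 2-element set {x,y} : {set W}.  A (sub)graph is a pair
   (U, F) of a node set and an edge set. *)
From HB Require Import structures.
From mathcomp Require Import all_boot.
Set Implicit Arguments. Unset Strict Implicit. Unset Printing Implicit Defensive.

Section Graphs.
Variable W : finType.

Definition graph := ({set W} * {set {set W}})%type.

Definition adj (U : {set W}) (F : {set {set W}}) : rel W :=
  fun x y => [&& x \in U, y \in U & [set x; y] \in F].

Definition gconnected (U : {set W}) (F : {set {set W}}) : bool :=
  [forall x in U, [forall y in U, connect (adj U F) x y]].

Definition del_node_edges (F : {set {set W}}) (w : W) : {set {set W}} :=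
  [set e in F | w \notin e].

Definition cut_node (H : graph) (v : W) : bool :=
  (v \in H.1) && ~~ gconnected (H.1 :\ v) (del_node_edges H.2 v).

Definition is_bridge (H : graph) (e : {set W}) : bool :=
  (e \in H.2) && ~~ gconnected H.1 (H.2 :\ e).

Definition subgraph (B H : graph) : bool :=
  [&& B.1 \subset H.1, B.2 \subset H.2 & [forall e in B.2, e \subset B.1]].

(* 2-node-connected: nonempty, connected, without cut-node; a single node is
   2-node-connected, a single edge (two nodes) is not (it is a bridge block). *)
Definition twoNC (B : graph) : bool :=
  [&& B.1 != set0, gconnected B.1 B.2,
      [forall w in B.1, gconnected (B.1 :\ w) (del_node_edges B.2 w)]
    & #|B.1| != 2].

Definition is2NCblock (H B : graph) : bool :=
  [&& subgraph B H, twoNC B &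
      [forall B' : graph, [&& subgraph B' H, twoNC B' & subgraph B B'] ==> (B' == B)]].

End Graphs.

Section Trees.
Variable N : finType.

Definition is_tree (r : rel N) : Prop :=
  [/\ 0 < #|N|, irreflexive r, symmetric r,
      (forall x y : N, connect r x y) &
      #|[set [set p.1; p.2] | p in [set p : N * N | r p.1 p.2]]|.+1 = #|N| ].

Definition tdeg (r : rel N) (a : N) : nat := #|[set b | r a b]|.

Definition induced (r : rel N) (S : {set N}) : rel N :=
  fun x y => [&& r x y, x \in S & y \in S].

Definition deg2_path (r : rel N) (a b : N) : Prop :=
  exists p : seq N,
    [/\ path r a p, last a p = b, uniq (a :: p) &
        all (fun x => tdeg r x == 2) (behead (belast a p))].

Definition is_condensed (r cbt : rel N) : Prop :=
  forall a b, cbt a b <->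
    [/\ tdeg r a != 2, tdeg r b != 2, a != b & deg2_path r a b].

End Trees.

Definition block_tree_adj (W N : finType) (H : graph W) (blk : N -> graph W)
    (bt : rel N) : Prop :=
  (forall a b (e : {set W}) x y, is_bridge H e -> e = [set x; y] ->
          x \in (blk a).1 -> y \in (blk b).1 -> bt a b) /\
      (forall v, cut_node H v ->
          let S := [set a | v \in (blk a).1] in
          forall a b, a \in S -> b \in S -> connect (induced bt S) a b).

Definition block_tree (W N : finType) (H : graph W) (blk : N -> graph W)
    (bt : rel N) : Prop :=
  [/\ injective blk,
      (forall a, is2NCblock H (blk a)),
      (forall B, is2NCblock H B -> exists a, blk a = B),
      is_tree bt &
      block_tree_adj H blk bt ].

(* the modified instance: vertices V + V, terminal t of the original instance is
   replaced by the new terminal inr t attached to inl t by a new safe edge *)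
Definition mod_edges (V : finType) (E : {set {set V}}) (T : {set V})
    : {set {set (V + V)}} :=
  [set (@inl V V) @: e | e : {set V} in E] :|: [set [set inl t; inr t] | t : V in T].

Definition mod_unsafe (V : finType) (Un : {set {set V}}) : {set {set (V + V)}} :=
  [set (@inl V V) @: e | e : {set V} in Un].

Definition mod_terminals (V : finType) (T : {set V}) : {set (V + V)} :=
  (@inr V V) @: T.

Definition feasible (W : finType) (Eg Un : {set {set W}}) (Tg : {set W})
    (H : graph W) : Prop :=
  [/\ H.2 \subset Eg, [forall e in H.2, e \subset H.1], Tg \subset H.1,
      gconnected H.1 H.2 &
      forall e, e \in H.2 -> e \in Un -> gconnected H.1 (H.2 :\ e)].

Definition minimal_feasible (W : finType) (Eg Un : {set {set W}}) (Tg : {set W})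
    (H : graph W) : Prop :=
  feasible Eg Un Tg H /\
  forall H' : graph W, feasible Eg Un Tg H' -> H'.1 \subset H.1 ->
    H'.2 \subset H.2 -> H' = H.

(* Main.v *)
Require Import Defs.
From HB Require Import structures.
From mathcomp Require Import all_boot zify.
From Stdlib Require Import ClassicalDescription.
Set Implicit Arguments. Unset Strict Implicit. Unset Printing Implicit Defensive.

Section G.
Variable W : finType.
Implicit Types (U : {set W}) (F : {set {set W}}).

Lemma set2_eqE (a b p q : W) : [set a; b] = [set p; q] ->
  (a = p /\ b = q) \/ (a = q /\ b = p).
Proof.
move=> E.
have ha : a \in [set p; q] by rewrite -E !inE eqxx.
have hb : b \in [set p; q] by rewrite -E !inE eqxx orbT.
have hp : p \in [set a; b] by rewrite E !inE eqxx.
have hq : q \in [set a; b] by rewrite E !inE eqxx orbT.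
move: ha hb hp hq; rewrite !inE => /orP[]/eqP-> /orP[]/eqP-> /orP[]/eqP hp /orP[]/eqP hq; subst; auto.
Qed.

Lemma adj_sym U F : symmetric (adj U F).
Proof. by move=> x y; rewrite /adj setUC; case: (x \in U); case: (y \in U). Qed.

Lemma adj_connect_sym U F x y : connect (adj U F) x y = connect (adj U F) y x.
Proof. exact: (sym_connect_sym (@adj_sym U F)). Qed.

Lemma adj_mono U U' F F' : U \subset U' -> F \subset F' ->
  forall x y, connect (adj U F) x y -> connect (adj U' F') x y.
Proof.
move=> sU sF x y; apply: connect_sub => a b /and3P[aU bU eF].
by apply: connect1; rewrite /adj (subsetP sU _ aU) (subsetP sU _ bU) (subsetP sF _ eF).
Qed.

Lemma edge_subst U F p q : connect (adj U (F :\ [set p; q])) p q ->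
  forall x y, connect (adj U F) x y -> connect (adj U (F :\ [set p; q])) x y.
Proof.
move=> Hpq x y; apply: connect_sub => a b /and3P[aU bU eF].
case: (eqVneq [set a; b] [set p; q]) => [/set2_eqE [[-> ->]|[-> ->]] | ne].
- exact: Hpq.
- by rewrite adj_connect_sym.
- by apply: connect1; rewrite /adj aU bU !inE ne eF.
Qed.

Lemma first_step (r : rel W) x z : connect r x z -> x != z -> exists y, r x y.
Proof.
case/connectP => [[|y p]] /=; first by move=> _ ->; rewrite eqxx.
by case/andP=> rxy _ _ _; exists y.
Qed.

Lemma gconn_pair U F x y : gconnected U F -> x \in U -> y \in U -> connect (adj U F) x y.
Proof. by move=> /forallP/(_ x)/implyP H xU yU; move/H: xU => /forallP/(_ y)/implyP; apply. Qed.

Lemma gconnP U F : (forall x y, x \in U -> y \in U -> connect (adj U F) x y) -> gconnected U F.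
Proof. move=> H; apply/forallP=> x; apply/implyP=> xU; apply/forallP=> y; apply/implyP=> yU; exact: H. Qed.

Lemma gconn_union U1 U2 F1 F2 s : gconnected U1 F1 -> gconnected U2 F2 ->
  s \in U1 -> s \in U2 -> gconnected (U1 :|: U2) (F1 :|: F2).
Proof.
move=> C1 C2 s1 s2.
have H: forall x, x \in U1 :|: U2 -> connect (adj (U1 :|: U2) (F1 :|: F2)) x s.
  move=> x; rewrite inE => /orP[x1|x2].
    by apply: (adj_mono (subsetUl _ _) (subsetUl _ _)); apply: gconn_pair.
  by apply: (adj_mono (subsetUr _ _) (subsetUr _ _)); apply: gconn_pair.
apply: gconnP => x y xU yU; apply: connect_trans (H x xU) _.
by rewrite adj_connect_sym; apply: H.
Qed.

End G.

Section H.
Variable W : finType.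
Variable H : graph W.
Hypothesis Hsub : forall e, e \in H.2 -> e \subset H.1.
Hypothesis H2 : forall e, e \in H.2 -> #|e| = 2.
Hypothesis Hconn : gconnected H.1 H.2.

Lemma sg_edges (B : graph W) e : subgraph B H -> e \in B.2 -> e \subset B.1.
Proof. by case/and3P=> _ _ /forallP/(_ e)/implyP. Qed.

Lemma twoNC_rm (B : graph W) w : subgraph B H -> twoNC B ->
  gconnected (B.1 :\ w) (del_node_edges B.2 w).
Proof.
move=> sB /and4P[_ Bc /forallP/(_ w) Hw _].
case wB: (w \in B.1); first by move/implyP: Hw; apply.
have -> : B.1 :\ w = B.1 by apply/setP=> x; rewrite !inE; case: eqP => // ->; rewrite wB.
have -> : del_node_edges B.2 w = B.2.
  apply/setP=> e; rewrite !inE; case eB: (e \in B.2); rewrite ?andbF //.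
  by case wE: (w \in e) => //; move: (subsetP (sg_edges sB eB) _ wE); rewrite wB.
done.
Qed.

Lemma edge2 e : e \in H.2 -> exists p q, p != q /\ e = [set p; q].
Proof. by move=> /H2 /eqP /cards2P. Qed.


Lemma conn_avoid (B : graph W) e x y : subgraph B H -> twoNC B ->
  x \in B.1 -> y \in B.1 -> connect (adj H.1 (H.2 :\ e)) x y.
Proof.
move=> sB tB xB yB; have /and3P[sB1 sB2 _] := sB.
have /and4P[_ Bc _ B2] := tB.
case eB: (e \in B.2).
  have [p [q [pq Ee]]] := edge2 (subsetP sB2 _ eB).
  have sE := sg_edges sB eB.
  have pB : p \in B.1 by apply: (subsetP sE); rewrite Ee !inE eqxx.
  have qB : q \in B.1 by apply: (subsetP sE); rewrite Ee !inE eqxx orbT.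
  have : 2 < #|B.1|.
    rewrite ltn_neqAle eq_sym B2 /=.
    have sub : [set p; q] \subset B.1 by apply/subsetP=> z; rewrite !inE => /orP[]/eqP->.
    by move: (subset_leq_card sub); rewrite cards2 pq.
  rewrite (cardsD1 p) pB (cardsD1 q) !inE eq_sym pq qB add1n ltnS add1n ltnS card_gt0.
  case/set0Pn=> z; rewrite !inE => /and3P[zq zp zB].
  have Hsub1 : forall w, w \in e -> forall a b,
     connect (adj (B.1 :\ w) (del_node_edges B.2 w)) a b -> connect (adj B.1 (B.2 :\ e)) a b.
    move=> w we a b; apply: adj_mono; first exact: subsetDl.
    apply/subsetP=> f; rewrite !inE => /andP[fB wf]; rewrite fB andbT.
    by apply/eqP=> fe; move: wf; rewrite fe we.
  have pq' : connect (adj B.1 (B.2 :\ e)) p q.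
    have h1 : connect (adj B.1 (B.2 :\ e)) p z.
      apply: (Hsub1 q); first by rewrite Ee !inE eqxx orbT.
      apply: gconn_pair; first exact: twoNC_rm.
        by rewrite !inE pB andbT.
      by rewrite !inE zq zB.
    have h2 : connect (adj B.1 (B.2 :\ e)) z q.
      apply: (Hsub1 p); first by rewrite Ee !inE eqxx.
      apply: gconn_pair; first exact: twoNC_rm.
        by rewrite !inE zp zB.
      by rewrite !inE qB andbT eq_sym.
    exact: connect_trans h1 h2.
  rewrite Ee in pq' *.
  apply: (adj_mono sB1 (setSD _ sB2)).
  exact: (edge_subst pq' (gconn_pair Bc xB yB)).
apply: adj_mono (gconn_pair Bc xB yB) => //.
by apply/subsetP=> f fB; rewrite !inE (subsetP sB2 _ fB) andbT; apply/eqP=> fe; move: eB; rewrite -fe fB.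
Qed.

Lemma bridge_contra x y : is_bridge H [set x; y] ->
  connect (adj H.1 (H.2 :\ [set x; y])) x y -> False.
Proof.
case/andP=> eH nc Hxy; move/negP: nc; apply; apply: gconnP=> a b aH bH.
by apply: edge_subst => //; apply: gconn_pair.
Qed.


Lemma subgraph_trans (A B C : graph W) : subgraph A B -> subgraph B C -> subgraph A C.
Proof.
case/and3P=> a1 a2 a3 /and3P[b1 b2 b3]; apply/and3P; split => //.
- exact: subset_trans b1.
- exact: subset_trans b2.
Qed.

Lemma twoNC_size (B : graph W) : twoNC B -> forall x y, x \in B.1 -> y \in B.1 -> x != y -> 2 < #|B.1|.
Proof.
case/and4P=> _ _ _ B2 x y xB yB xy; rewrite ltn_neqAle eq_sym B2 /=.
have sub : [set x; y] \subset B.1 by apply/subsetP=> z; rewrite !inE => /orP[]/eqP->.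
by move: (subset_leq_card sub); rewrite cards2 xy.
Qed.

Lemma union_twoNC (B1 B2 : graph W) v v' : subgraph B1 H -> subgraph B2 H ->
  twoNC B1 -> twoNC B2 -> v != v' -> v \in B1.1 -> v' \in B1.1 -> v \in B2.1 -> v' \in B2.1 ->
  subgraph (B1.1 :|: B2.1, B1.2 :|: B2.2) H /\ twoNC (B1.1 :|: B2.1, B1.2 :|: B2.2).
Proof.
move=> s1 s2 t1 t2 vv' v1 v'1 v2 v'2.
have /and3P[s11 s12 s13] := s1; have /and3P[s21 s22 s23] := s2.
split.
  apply/and3P; split => /=; rewrite ?subUset ?s11 ?s12 ?s21 ?s22 //.
  apply/forallP=> e; apply/implyP; rewrite inE => /orP[] eB.
    exact: subset_trans (sg_edges s1 eB) (subsetUl _ _).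
  exact: subset_trans (sg_edges s2 eB) (subsetUr _ _).
have /and4P[_ c1 _ _] := t1; have /and4P[_ c2 _ _] := t2.
apply/and4P; split => /=.
- by apply/set0Pn; exists v; rewrite inE v1.
- exact: gconn_union c1 c2 v1 v2.
- apply/forallP=> w; apply/implyP=> _.
  have -> : (B1.1 :|: B2.1) :\ w = (B1.1 :\ w) :|: (B2.1 :\ w) by rewrite setDUl.
  have -> : del_node_edges (B1.2 :|: B2.2) w = del_node_edges B1.2 w :|: del_node_edges B2.2 w.
    by apply/setP=> e; rewrite !inE andb_orl.
  case: (eqVneq v w) => [vw|vw].
    apply: (gconn_union (s := v')) (twoNC_rm w s1 t1) (twoNC_rm w s2 t2) _ _.
      by rewrite !inE v'1 andbT -vw eq_sym.
    by rewrite !inE v'2 andbT -vw eq_sym.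
  apply: (gconn_union (s := v)) (twoNC_rm w s1 t1) (twoNC_rm w s2 t2) _ _.
    by rewrite !inE v1 andbT.
  by rewrite !inE v2 andbT.
- rewrite neq_ltn; apply/orP; right.
  apply: leq_trans (twoNC_size t1 v1 v'1 vv') (subset_leq_card (subsetUl _ _)).
Qed.

Lemma block_share (B1 B2 : graph W) v v' : is2NCblock H B1 -> is2NCblock H B2 ->
  v != v' -> v \in B1.1 -> v' \in B1.1 -> v \in B2.1 -> v' \in B2.1 -> B1 = B2.
Proof.
case/and3P=> s1 t1 /forallP m1 /and3P[s2 t2 /forallP m2] vv' v1 v'1 v2 v'2.
have [sU tU] := union_twoNC s1 s2 t1 t2 vv' v1 v'1 v2 v'2.
have e1 : (B1.1 :|: B2.1, B1.2 :|: B2.2) = B1.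
  apply/eqP; move/implyP: (m1 (B1.1 :|: B2.1, B1.2 :|: B2.2)); apply.
  rewrite sU tU /=; apply/and3P; split; rewrite /= ?subsetUl //.
  by case/and3P: s1.
have e2 : (B1.1 :|: B2.1, B1.2 :|: B2.2) = B2.
  apply/eqP; move/implyP: (m2 (B1.1 :|: B2.1, B1.2 :|: B2.2)); apply.
  rewrite sU tU /=; apply/and3P; split; rewrite /= ?subsetUr //.
  by case/and3P: s2.
exact: (etrans (esym e1) e2).
Qed.

Lemma extend_block (B : graph W) : subgraph B H -> twoNC B ->
  exists B', is2NCblock H B' /\ subgraph B B'.
Proof.
move=> sB tB.
pose P := fun B' : graph W => [&& subgraph B' H, twoNC B' & subgraph B B'].
have PB : P B.
  rewrite /P sB tB /=; apply/and3P; split => //; by case/and3P: sB.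
case: (arg_maxnP (fun B' : graph W => #|B'.1| + #|B'.2|) PB) => M /and3P[sM tM bM] Mmax.
exists M; split => //.
apply/and3P; split => //; apply/forallP => B'; apply/implyP => /and3P[s' t' MB'].
have PB' : P B' by rewrite /P s' t' (subgraph_trans bM MB').
have le := Mmax B' PB'.
case/and3P: MB' => m1 m2 _.
have c1 := subset_leq_card m1; have c2 := subset_leq_card m2.
have eq1 : M.1 == B'.1.
  rewrite eqEcard m1 /= -(leq_add2r #|B'.2|); apply: leq_trans le _; by rewrite leq_add2l.
have eq2 : M.2 == B'.2.
  rewrite eqEcard m2 /= -(leq_add2l #|B'.1|); apply: leq_trans le _; by rewrite leq_add2r.
by case: M B' eq1 eq2 {sM tM bM Mmax PB' le c1 c2 m1 m2 s' t'} => [? ?] [? ?] /= /eqP-> /eqP->.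
Qed.

Lemma single_twoNC u : u \in H.1 -> subgraph ([set u], set0) H /\ twoNC ([set u], set0).
Proof.
move=> uH; split.
  apply/and3P; split => /=; rewrite ?sub1set ?sub0set //.
  by apply/forallP=> e; rewrite inE.
apply/and4P; split => /=.
- by apply/set0Pn; exists u; rewrite inE.
- by apply: gconnP => x y; rewrite !inE => /eqP-> /eqP->.
- apply/forallP=> w; apply/implyP=> _; apply: gconnP => x y; rewrite !inE.
  by case/andP=> /negP xw /eqP xu; case/andP=> /negP yw /eqP yu; subst.
- by rewrite cards1.
Qed.


Lemma path_adj_all (U : {set W}) (F : {set {set W}}) x p : path (adj U F) x p -> all (mem U) p.
Proof.
elim: p x => //= y p IH x /andP[/and3P[_ yU _] pp]; rewrite yU /=; exact: IH pp.
Qed.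

Lemma nonbridge_block v u : [set v; u] \in H.2 ->
  connect (adj H.1 (H.2 :\ [set v; u])) u v ->
  exists B : graph W, [/\ subgraph B H, twoNC B, v \in B.1 & u \in B.1].
Proof.
move=> eH /connectP[p0 pth0 lst0].
move: lst0; case: (shortenP pth0) => p pth uq _ lst {pth0}.
have vu : v != u.
  by apply/eqP=> vu; move: (H2 eH); rewrite vu setUid cards1.
have uH : u \in H.1 by apply: (subsetP (Hsub eH)); rewrite !inE eqxx orbT.
pose C := [set x in u :: p].
pose E := [set f in H.2 | f \subset C].
have allH : {subset C <= H.1}.
  move=> x; rewrite inE in_cons => /orP[/eqP->//|xp].
  by move/allP: (path_adj_all pth) => /(_ x xp).
have uC : u \in C by rewrite inE mem_head.
have vC : v \in C by rewrite inE lst mem_last.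
pose R0 := adj C E.
have pth1 : path R0 u p.
  apply: (sub_in_path (P := mem C)) pth; last by apply/allP=> x xin; change (x \in C); rewrite inE.
  move=> a b aC bC /and3P[_ _]; rewrite !inE => /andP[_ abH].
  rewrite /R0 /adj aC bC !inE abH /=.
  by rewrite subUset !sub1set; apply/andP; split.
have cyc : cycle R0 (u :: p).
  rewrite /= rcons_path pth1 -lst /R0 /adj vC uC !inE eH /=.
  by rewrite subUset !sub1set vC uC.
exists (C, E); split => //=.
  apply/and3P; split => /=.
  - by apply/subsetP.
  - by apply/subsetP=> f; rewrite inE => /andP[].
  - by apply/forallP=> f; apply/implyP; rewrite inE => /andP[].
apply/and4P; split => /=.
- by apply/set0Pn; exists u.
- apply: gconnP => x y xC yC.
  have hx : connect R0 u x by apply: (path_connect pth1); rewrite inE in xC.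
  have hy : connect R0 u y by apply: (path_connect pth1); rewrite inE in yC.
  by apply: connect_trans _ hy; rewrite adj_connect_sym.
- apply/forallP=> w; apply/implyP=> wC.
  have wc : w \in u :: p by rewrite inE in wC.
  case: (rot_to wc) => i s Er.
  have cyc' : cycle R0 (w :: s) by rewrite -Er rot_cycle.
  have uq' : uniq (w :: s) by rewrite -Er rot_uniq.
  have memC : forall a, (a \in C) = (a \in w :: s) by move=> a; rewrite inE -Er mem_rot.
  case: s Er cyc' uq' memC => [|z s'] Er cyc' uq' memC.
    apply: gconnP => x y; rewrite in_setD1 => /andP[xw xC].
    by move: xC; rewrite memC inE (negbTE xw).
  move: cyc'; rewrite /cycle rcons_path => /andP[pwz _]; move: pwz; rewrite [path _ _ _]/= => /andP[_ pz].
  pose R1 := adj (C :\ w) (del_node_edges E w).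
  have nw : w \notin z :: s' by case/andP: uq'.
  pose P : pred W := fun a => (a != w) && (a \in C).
  have subr : {in P &, subrel R0 R1}.
    move=> a b /andP[aw aC] /andP[bw bC] /and3P[_ _ abE].
    rewrite /R1 /adj !in_setD1 aw aC bw bC /= /del_node_edges in_set abE /=.
    by rewrite !inE negb_or eq_sym aw eq_sym bw.
  have allP' : all P (z :: s').
    apply/allP=> a az; rewrite /P memC in_cons az orbT andbT.
    by apply/eqP=> aw; move: nw; rewrite -aw az.
  have pz1 : path R1 z s' := sub_in_path subr allP' pz.
  apply: gconnP => x y; rewrite !in_setD1 => /andP[xw xC] /andP[yw yC].
  have xs : x \in z :: s' by move: xC; rewrite memC in_cons (negbTE xw).
  have ys : y \in z :: s' by move: yC; rewrite memC in_cons (negbTE yw).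
  have hx := path_connect pz1 xs; have hy := path_connect pz1 ys.
  by apply: connect_trans _ hy; rewrite adj_connect_sym.
- have -> : #|C| = (size p).+1.
    by rewrite cardsE; move/card_uniqP: uq => ->.
  case: p pth uq lst {C E allH uC vC R0 pth1 cyc} => [|y [|y' p']] //=.
  move=> /andP[/and3P[_ _] + _] _ /= vy; rewrite -vy !inE => /andP[].
  by rewrite setUC eqxx.
Qed.


Lemma first_hit (U : {set W}) (F : {set {set W}}) x v : connect (adj U F) x v -> x != v ->
  exists w, [/\ adj U F w v, w != v & connect (adj (U :\ v) (del_node_edges F v)) x w].
Proof.
case/connectP=> p; elim: p x => [|y p IH] x /=; first by move=> _ ->; rewrite eqxx.
case/andP=> axy pp lst xv.
case: (eqVneq y v) => [yv|yv].
  by exists x; split => //; rewrite -yv.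
have [w [awv wv cyw]] := IH y pp lst yv.
exists w; split => //; apply: connect_trans _ cyw; apply: connect1.
case/and3P: axy => xU yU exy.
by rewrite /adj !in_setD1 xv xU yv yU /del_node_edges in_set exy !inE negb_or eq_sym xv eq_sym yv.
Qed.

Lemma cut_bridge (B : graph W) v : is2NCblock H B -> v \in B.1 -> cut_node H v ->
  (forall B', is2NCblock H B' -> v \in B'.1 -> B' = B) ->
  exists u, is_bridge H [set v; u].
Proof.
move=> bB vB /andP[vH ncut] uniqB.
case: (boolP [exists u, is_bridge H [set v; u]]) => [/existsP//|/existsP nb].
have nbr : forall u, [set v; u] \in H.2 -> u \in B.1.
  move=> u eH.
  have uH : u \in H.1 by apply: (subsetP (Hsub eH)); rewrite !inE eqxx orbT.
  have hc : gconnected H.1 (H.2 :\ [set v; u]).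
    by apply/negPn/negP=> nc; apply: nb; exists u; rewrite /is_bridge eH nc.
  have [B0 [s0 t0 v0 u0]] := nonbridge_block eH (gconn_pair hc uH vH).
  have [B' [bB' sub']] := extend_block s0 t0.
  have EB := uniqB B' bB' (subsetP (proj1 (andP sub')) _ v0).
  by rewrite -EB; apply: (subsetP (proj1 (andP sub'))).
exfalso; move/negP: ncut; apply; apply: gconnP => x y xH yH.
move: (xH) (yH); rewrite !in_setD1 => /andP[xv xH'] /andP[yv yH'].
have [w1 [a1 w1v c1]] := first_hit (gconn_pair Hconn xH' vH) xv.
have [w2 [a2 w2v c2]] := first_hit (gconn_pair Hconn yH' vH) yv.
have w1B : w1 \in B.1 by apply: nbr; case/and3P: a1 => _ _; rewrite setUC.
have w2B : w2 \in B.1 by apply: nbr; case/and3P: a2 => _ _; rewrite setUC.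
have /and3P[sB tB _] := bB.
have cw : connect (adj (H.1 :\ v) (del_node_edges H.2 v)) w1 w2.
  have /and3P[sB1 sB2 _] := sB.
  apply: (adj_mono (F := del_node_edges B.2 v) (setSD _ sB1)).
    apply/subsetP=> e; rewrite /del_node_edges !in_set; case/andP=> eB ve.
    by rewrite (subsetP sB2 _ eB) ve.
  by apply: gconn_pair; [exact: twoNC_rm | rewrite in_setD1 w1v | rewrite in_setD1 w2v].
apply: connect_trans (connect_trans c1 cw) _.
by rewrite adj_connect_sym.
Qed.

End H.

Definition pb (P : Prop) : bool := if excluded_middle_informative P then true else false.
Lemma pbP (P : Prop) : reflect P (pb P).
Proof. by rewrite /pb; case: excluded_middle_informative => h; constructor. Qed.

Lemma card_le_rel (T1 T2 : finType) (A : {set T1}) (B : {set T2}) (R : T1 -> T2 -> Prop) :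
  (forall x, x \in A -> exists y, y \in B /\ R x y) ->
  (forall x x' y, x \in A -> x' \in A -> R x y -> R x' y -> x = x') -> #|A| <= #|B|.
Proof.
move=> ex inj.
pose f := fun x => [pick y | (y \in B) && pb (R x y)].
have fS : forall x, x \in A -> exists y, f x = Some y /\ y \in B /\ R x y.
  move=> x xA; rewrite /f; case: pickP => [y /andP[yB /pbP Rxy]|none].
    by exists y.
  by have [y [yB Rxy]] := ex x xA; move: (none y); rewrite yB /=; move/pbP: Rxy => ->.
have -> : #|A| = #|f @: A|.
  rewrite card_in_imset // => x x' xA x'A fe.
  have [y [fy [_ Ry]]] := fS x xA; have [y' [fy' [_ Ry']]] := fS x' x'A.
  by move: fe; rewrite fy fy' => [[e]]; subst; apply: (inj x x' y').
rewrite -(card_imset B (@Some_inj _)).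
apply: subset_leq_card; apply/subsetP=> o /imsetP[x xA ->].
by have [y [-> [yB _]]] := fS x xA; apply: imset_f.
Qed.

Lemma card_sum_bool (T : finType) (P : pred T) : #|[set a | P a]| = \sum_a P a.
Proof.
rewrite -sum1dep_card big_mkcond /=; apply: eq_bigr => a _; by case: (P a).
Qed.

Section Tr.
Variable N : finType.
Variable r : rel N.
Hypothesis rsym : symmetric r.

Lemma deg2_uniq_nb x y z w : tdeg r y = 2 -> r y x -> r y z -> r y w -> z != x -> w != x -> z = w.
Proof.
move=> d yx yz yw zx wx.
have /cards2P[a [b [ab E]]] : #|[set c | r y c]| == 2 by rewrite -/(tdeg r y) d.
have : x \in [set c | r y c] by rewrite inE.
have : z \in [set c | r y c] by rewrite inE.
have : w \in [set c | r y c] by rewrite inE.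
rewrite E !inE => /orP[]/eqP hw /orP[]/eqP hz /orP[]/eqP hx; subst => //;
  by rewrite eqxx in zx wx.
Qed.

Lemma forced x y p q : path r x (y :: p) -> path r x (y :: q) ->
  uniq (x :: y :: p) -> uniq (x :: y :: q) ->
  all (fun z => tdeg r z == 2) (belast y p) -> all (fun z => tdeg r z == 2) (belast y q) ->
  tdeg r (last y p) != 2 -> tdeg r (last y q) != 2 -> last y p = last y q.
Proof.
elim: p x y q => [|z p IH] x y [|w q] //=.
- by move=> _ _ _ _ _ /andP[/eqP ->].
- by move=> _ _ _ _ /andP[/eqP ->].
move=> /and3P[rxy ryz pz] /and3P[_ ryw pw] u1 u2 /andP[/eqP dy a1] /andP[_ a2] l1 l2.
have zx : z != x by apply/eqP=> zx; move: u1; rewrite zx !inE eqxx !orbT.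
have wx : w != x by apply/eqP=> wx; move: u2; rewrite wx !inE eqxx !orbT.
have ryx : r y x by rewrite rsym.
have zw := deg2_uniq_nb dy ryx ryz ryw zx wx; subst w.
apply: (IH y) => //=; rewrite ?ryz ?pz ?pw //.
- by case/andP: u1.
- by case/andP: u2.
Qed.

Lemma cbt_le (cbt : rel N) a : is_condensed r cbt -> tdeg cbt a <= tdeg r a.
Proof.
move=> Hc; apply: (card_le_rel (R := fun b c => exists p, [/\ path r a (c :: p), last c p = b,
   uniq (a :: c :: p) & all (fun z => tdeg r z == 2) (belast c p)])).
  move=> b; rewrite inE => /Hc[_ _ ab [[|c p] [pth lst uq al]]].
    by move: ab; rewrite -lst /= eqxx.
  exists c; split; first by rewrite inE; case/andP: pth.
  by exists p.
move=> b b' c; rewrite !inE => /Hc[_ db _ _] /Hc[_ db' _ _] [p [p1 l1 u1 a1]] [q [q1 l2 u2 a2]].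
by rewrite -l1 -l2; apply: (forced p1 q1) => //; rewrite ?l1 ?l2.
Qed.



Hypothesis rirr : irreflexive r.

Definition tedges := [set [set p.1; p.2] | p in [set p : N * N | r p.1 p.2]].

Lemma deg_sum : \sum_a tdeg r a = 2 * #|tedges|.
Proof.
have -> : \sum_a tdeg r a = #|[set p : N * N | r p.1 p.2]|.
  rewrite card_sum_bool -(pair_big xpredT xpredT (fun a b => nat_of_bool (r a b))) /=.
  by apply: eq_bigr => a _; rewrite /tdeg card_sum_bool.
rewrite -sum1_card (partition_big_imset (fun p : N * N => [set p.1; p.2])) /=.
rewrite -/tedges mulnC -sum_nat_const; apply: eq_bigr => e /imsetP[[a b]]; rewrite inE /= => rab ->.
rewrite sum1dep_card.
have -> : [set p | (p \in [set p : N * N | r p.1 p.2]) && ([set p.1; p.2] == [set a; b])] = [set (a, b); (b, a)].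
  apply/setP=> [[x y]]; rewrite !inE /= -!pair_eqE /=.
  apply/andP/idP.
    by case=> _ /eqP/set2_eqE[[-> ->]|[-> ->]]; rewrite !eqxx ?orbT.
  case/orP=> /andP[/eqP -> /eqP ->]; rewrite ?rab ?eqxx; split => //.
    by rewrite rsym.
  by rewrite setUC.
rewrite cards2; suff : (a, b) != (b, a) by move=> ->.
by rewrite -pair_eqE /= negb_and; apply/orP; left; apply/eqP=> ab; move: rab; rewrite ab rirr.
Qed.

Lemma tree_count : is_tree r ->
  \sum_(a | 3 <= tdeg r a) tdeg r a + 6 <= 3 * #|[set a | tdeg r a == 1]| + 6 * #|[set a | tdeg r a == 0]|.
Proof.
case=> n0 _ _ _ ecount.
have ds := deg_sum; rewrite -/tedges in ecount.
have pw : \sum_a ((if 3 <= tdeg r a then tdeg r a else 0) + 6) <=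
          \sum_a (3 * (tdeg r a == 1) + 6 * (tdeg r a == 0) + 3 * tdeg r a).
  apply: leq_sum => a _; case: (tdeg r a) => [|[|[|m]]] //=; lia.
have E1 : \sum_a ((if 3 <= tdeg r a then tdeg r a else 0) + 6) = \sum_(a | 3 <= tdeg r a) tdeg r a + #|N| * 6.
  by rewrite big_split /= -big_mkcond /= -sum_nat_const.
have E2 : \sum_a (3 * (tdeg r a == 1) + 6 * (tdeg r a == 0) + 3 * tdeg r a) =
   3 * #|[set a | tdeg r a == 1]| + 6 * #|[set a | tdeg r a == 0]| + 3 * (2 * #|tedges|).
  rewrite -ds !card_sum_bool.
  have sp : forall (F G K : N -> nat), \sum_a (F a + G a + K a) = \sum_a F a + \sum_a G a + \sum_a K a.
    by move=> F G K; rewrite big_split big_split.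
  rewrite (sp (fun a => 3 * (tdeg r a == 1)) (fun a => 6 * (tdeg r a == 0)) (fun a => 3 * tdeg r a)).
  by rewrite !big_distrr.
rewrite E1 E2 in pw; move: pw; lia.
Qed.

End Tr.

Section Mod.
Variable V : finType.
Variables (E Un : {set {set V}}) (T : {set V}).
Hypothesis HE : forall e, e \in E -> #|e| = 2.

Lemma mod_edge2 e : e \in mod_edges E T -> #|e| = 2.
Proof.
rewrite /mod_edges inE => /orP[]/imsetP[x xE ->].
  by rewrite card_imset ?HE //; exact: inl_inj.
by rewrite cards2.
Qed.

Lemma mod_term_edge e t : e \in mod_edges E T -> inr t \in e -> e = [set inl t; inr t].
Proof.
rewrite /mod_edges inE => /orP[]/imsetP[x xE ->].
  by case/imsetP.
by rewrite !inE => /orP[]/eqP // [->].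
Qed.

Variable H : graph (V + V)%type.
Hypothesis HsubE : H.2 \subset mod_edges E T.
Hypothesis Hsub : forall e, e \in H.2 -> e \subset H.1.

Lemma term_block (B : graph (V + V)%type) t : subgraph B H -> twoNC B -> inr t \in B.1 ->
  B = ([set inr t], set0).
Proof.
move=> sB tB tin.
have /and3P[sB1 sB2 _] := sB.
have B1 : B.1 = [set inr t].
  apply/eqP; rewrite eq_sym eqEcard sub1set tin cards1 /=.
  rewrite leqNgt; apply/negP => gt1.
  have [z zB zt] : exists2 z, z \in B.1 & inr t != z.
    have : 0 < #|B.1 :\ inr t| by move: gt1; rewrite (cardsD1 (inr t)) tin add1n ltnS.
    by case/card_gt0P => z; rewrite in_setD1 => /andP[zt zB]; exists z; rewrite // eq_sym.
  have gt2 := twoNC_size tB tin zB zt.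
  have [z' [z'B z't z'l]] : exists z', [/\ z' \in B.1, inr t != z' & z' != inl t].
    have : 0 < #|(B.1 :\ inr t) :\ inl t|.
      move: gt2; rewrite (cardsD1 (inr t)) tin (cardsD1 (inl t) (B.1 :\ inr t)).
      by case: (inl t \in _) => /=; rewrite ?add1n ?add0n ?ltnS // => /ltnW.
    case/card_gt0P => z'; rewrite !in_setD1 => /and3P[z'l z't z'B].
    by exists z'; split; rewrite // eq_sym.
  have gc := twoNC_rm (inl t) sB tB.
  have c : connect (adj (B.1 :\ inl t) (del_node_edges B.2 (inl t))) (inr t) z'.
    apply: gconn_pair gc _ _; rewrite in_setD1 ?tin ?z'B ?z'l //.
  have [y /and3P[_ _]] := first_step c z't.
  rewrite /del_node_edges in_set => /andP[eB nl].
  have eH := subsetP sB2 _ eB.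
  move: nl; rewrite (@mod_term_edge _ t (subsetP HsubE _ eH)) ?inE ?eqxx //.
have B2 : B.2 = set0.
  apply/setP=> e; rewrite inE; apply/negP => eB.
  have eH := subsetP sB2 _ eB.
  have := subset_leq_card (sg_edges sB eB); rewrite B1 cards1 (mod_edge2 (subsetP HsubE _ eH)).
  by [].
by case: B sB tB tin B1 B2 {sB1 sB2} => [b1 b2] /= _ _ _ -> ->.
Qed.
End Mod.

Unset Implicit Arguments.
Set Strict Implicit.

Theorem lemma5p4 (V : finType) (E Un : {set {set V}}) (T : {set V}) (k : nat)
    (HE : forall e, e \in E -> #|e| = 2) (HUn : Un \subset E)
    (Hk : #|T| = k) (Hk3 : 3 <= k)
    (H : graph (V + V)%type)
    (Hmin : minimal_feasible (mod_edges E T) (mod_unsafe Un) (mod_terminals T) H)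
    (N : finType) (blk : N -> graph (V + V)%type) (bt cbt : rel N)
    (HBT : block_tree H blk bt)
    (Hleaf : forall a, tdeg bt a = 1 ->
        #|(blk a).1 :&: mod_terminals T| = 1)
    (HCBT : is_condensed bt cbt) :
  \sum_(a : N | (tdeg bt a != 2) && (1 < tdeg cbt a))
      #|[set v in (blk a).1 | cut_node H v]| <= 3 * k - 6.
Proof.
case: Hmin => [[HsubE Hsub' HT Hconn _] _].
have Hsub : forall e, e \in H.2 -> e \subset H.1.
  by move=> e eH; move/forallP/(_ e)/implyP: Hsub' => /(_ eH).
have H2 : forall e, e \in H.2 -> #|e| = 2.
  by move=> e eH; exact: (mod_edge2 HE (subsetP HsubE _ eH)).
case: HBT => blk_inj blk_ok blk_surj Htree [Hbr Hcut].
have Htree' := Htree; case: Htree => n0 birr bsym bconn ecount.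
have cutle : forall a, #|[set v in (blk a).1 | cut_node H v]| <= tdeg bt a.
  move=> a; have /and3P[sa ta _] := blk_ok a.
  apply: (card_le_rel (R := fun v c => bt a c && ((v \in (blk c).1) ||
            [exists u in (blk c).1, is_bridge H [set v; u]]))).
  - move=> v; rewrite inE => /andP[va vcut].
    case: (boolP [exists b, (b != a) && (v \in (blk b).1)]) => [/existsP[b /andP[ba vb]]|nex].
      have cab : connect (induced bt [set a | v \in (blk a).1]) a b.
        by apply: (Hcut v vcut); rewrite inE.
      have ab : a != b by rewrite eq_sym.
      have [c /and3P[bac _ cS]] := first_step cab ab.
      by exists c; rewrite inE bac; rewrite inE in cS; rewrite cS.
    have uniqB : forall B', is2NCblock H B' -> v \in B'.1 -> B' = blk a.
      move=> B' bB' vB'; have [b Eb] := blk_surj B' bB'; subst B'.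
      case: (eqVneq b a) => [->//|ba]; exfalso; move/negP: nex; apply.
      by apply/existsP; exists b; rewrite ba vB'.
    have [u br] := cut_bridge Hsub H2 Hconn (blk_ok a) va vcut uniqB.
    have uH : u \in H.1.
      by case/andP: br => eH _; apply: (subsetP (Hsub _ eH)); rewrite !inE eqxx orbT.
    have [s1 t1] := single_twoNC uH.
    have [B' [bB' sB']] := extend_block s1 t1.
    have [c Ec] := blk_surj B' bB'.
    have uc : u \in (blk c).1.
      by rewrite Ec; case/and3P: sB' => /subsetP /(_ u) + _ _; apply; rewrite inE.
    have bac : bt a c by apply: (Hbr a c [set v; u] v u br erefl va uc).
    exists c; rewrite inE bac /=; split => //.
    by apply/orP; right; apply/existsP; exists u; rewrite uc br.
  - move=> v v' c; rewrite !inE => /andP[va vcut] /andP[v'a v'cut] /andP[ac hv] /andP[_ hv'].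
    case: (eqVneq v v') => // vv'; exfalso.
    have ca : a != c by apply/eqP=> e; move: ac; rewrite e birr.
    have /and3P[sc tc _] := blk_ok c.
    have CA : forall e x y, x \in (blk a).1 -> y \in (blk a).1 -> connect (adj H.1 (H.2 :\ e)) x y.
      by move=> e x y; apply: (conn_avoid H2 e sa ta).
    have CC : forall e x y, x \in (blk c).1 -> y \in (blk c).1 -> connect (adj H.1 (H.2 :\ e)) x y.
      by move=> e x y; apply: (conn_avoid H2 e sc tc).
    case/orP: hv => [vc | /existsP[u /andP[uc bu]]]; case/orP: hv' => [v'c | /existsP[u' /andP[u'c bu']]].
    + move/eqP: ca; apply; apply: blk_inj.
      exact: (block_share (blk_ok a) (blk_ok c) vv' va v'a vc v'c).
    + apply: (bridge_contra Hconn bu').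
      exact: connect_trans (CA _ v' v v'a va) (CC _ v u' vc u'c).
    + apply: (bridge_contra Hconn bu).
      exact: connect_trans (CA _ v v' va v'a) (CC _ v' u v'c uc).
    + apply: (bridge_contra Hconn bu).
      case: (eqVneq [set v'; u'] [set v; u]) => [Ee|ne].
        case: (set2_eqE Ee) => [[e1 _]|[e1 e2]]; first by rewrite e1 eqxx in vv'.
        by rewrite -e1; apply: CA.
      apply: connect_trans (CA _ v v' va v'a) _.
      apply: connect_trans (CC _ u' u u'c uc).
      apply: connect1.
      have eH : [set v'; u'] \in H.2 by case/andP: bu'.
      have /andP[v'H u'H] : (v' \in H.1) && (u' \in H.1).
        by rewrite -!sub1set -subUset; apply: Hsub.
      by rewrite /adj v'H u'H !inE ne eH.
have P3 : forall a, (tdeg bt a != 2) && (1 < tdeg cbt a) -> 2 < tdeg bt a.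
  move=> a /andP[d2 c1]; have := cbt_le bsym a HCBT.
  move: d2 c1; move: (tdeg bt a) (tdeg cbt a) => x y; lia.
have leafk : #|[set a | tdeg bt a == 1]| <= k.
  have cT : #|mod_terminals T| = #|T| by rewrite card_imset //; exact: inr_inj.
  rewrite -Hk -cT.
  apply: (card_le_rel (R := fun a t => t \in (blk a).1 :&: mod_terminals T)).
  - move=> a; rewrite inE => /eqP/Hleaf/eqP/cards1P[t Et].
    have : t \in (blk a).1 :&: mod_terminals T by rewrite Et inE.
    by move=> ht; exists t; split => //; case/setIP: ht.
  - move=> a a' t _ _ /setIP[ta /imsetP[t0 _ Et]] /setIP[ta' _]; subst t.
    have /and3P[sa ta2 _] := blk_ok a; have /and3P[sa' ta2' _] := blk_ok a'.
    apply: blk_inj.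
    by rewrite (term_block HE HsubE sa ta2 ta) (term_block HE HsubE sa' ta2' ta').
have tc := tree_count bsym birr Htree'.
case: (boolP [exists a, tdeg bt a == 0]) => [/existsP[a0 /eqP d0] | n0f].
  rewrite big1 // => a /andP[_ ca]; exfalso.
  have all0 : forall b, b = a0.
    move=> b; case: (eqVneq a0 b) => // ab; exfalso.
    have [y ay] := first_step (bconn a0 b) ab.
    have : y \in [set b | bt a0 b] by rewrite inE.
    by move/eqP: d0; rewrite cards_eq0 => /eqP ->; rewrite inE.
  have : tdeg cbt a == 0.
    rewrite cards_eq0; apply/eqP/setP=> b; rewrite !inE.
    by apply/negP => /HCBT[_ _ + _]; rewrite (all0 a) (all0 b) eqxx.
  by move/eqP=> e; rewrite e in ca.
have z0 : #|[set a | tdeg bt a == 0]| = 0.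
  apply/eqP; rewrite cards_eq0; apply/eqP/setP => a; rewrite !inE.
  by apply/negP => h; move/negP: n0f; apply; apply/existsP; exists a.
rewrite z0 in tc.
have s1 : \sum_(a | (tdeg bt a != 2) && (1 < tdeg cbt a)) #|[set v in (blk a).1 | cut_node H v]|
        <= \sum_(a | (tdeg bt a != 2) && (1 < tdeg cbt a)) tdeg bt a.
  by apply: leq_sum => a _; apply: cutle.
have s2 : \sum_(a | (tdeg bt a != 2) && (1 < tdeg cbt a)) tdeg bt a <= \sum_(a | 2 < tdeg bt a) tdeg bt a.
  rewrite [X in X <= _]big_mkcond [X in _ <= X]big_mkcond /=.
  apply: leq_sum => a _; case: ifP => // /P3 ->; by [].
have fin : forall a b c d : nat, a <= b -> b + 6 <= 3 * c + 6 * 0 -> c <= d -> a <= 3 * d - 6.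
  by move=> *; lia.
exact: fin (leq_trans s1 s2) tc leafk.
Qed.
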